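(* Let $G$ be an edge-colored graph of order $n\geq 3$. If $e(G)+c(G)\geq\binom{n+1}{2}$ and $G$ contains exactly one rainbow triangle, then $G$ belongs to $\mathcal{G}_1$.
   Context: An edge-colored graph is a finite simple graph $G$ with a map $C:E(G)\to\mathbb{N}$. $e(G)=|E(G)|$, $c(G)$ is the number of distinct colors appearing on $E(G)$. A subgraph is rainbow if all its edges have distinct colors, monochromatic if all its edges have the same color. For disjoint $S,S'\subseteq V(G)$, $G[S,S']$ is the bipartite subgraph with classes $S,S'$ and all edges of $G$ between them. The family $\mathcal{G}_0$ of edge-colored complete graphs is defined recursively: $K_1\in\mathcal{G}_0$; an edge-colored complete graph $G$ of order $n\ge 2$ belongs to $\mathcal{G}_0$ iff $c(G)=n-1$ and there is a partition $V(G)=V_1\cup V_2$ into nonempty sets with $G[V_1,V_2]$ monochromatic and $G[V_i]\in\mathcal{G}_0$ for $i=1,2$. The family $\mathcal{G}_1$ of edge-colored complete graphs is defined by: the rainbow triangle (complete graph on 3 vertices with 3 distinct colors) belongs to $\mathcal{G}_1$; an edge-colored complete graph $G$ of order $n\ge 4$ belongs to $\mathcal{G}_1$ iff $c(G)=n$ and there is a partition $V(G)=V_1\cup V_2$ into nonempty sets such that $G[V_1,V_2]$ is monochromatic, $G[V_1]\in\mathcal{G}_1$ and $G[V_2]\in\mathcal{G}_0$. *)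

(* Defs.v *)
From mathcomp Require Import all_boot.
Set Implicit Arguments. Unset Strict Implicit. Unset Printing Implicit Defensive.

(* An edge-colored simple graph on the finite vertex type T is given by an
   adjacency relation [adj] (assumed symmetric and irreflexive in the theorem)
   and a color function [col : T -> T -> nat] (assumed symmetric); only the
   values [col x y] with [adj x y] are meaningful: they form the coloring
   C : E(G) -> nat.  Subgraphs G[A] are induced subgraphs on A : {set T}. *)

Section EdgeColored.
Variables (T : finType) (adj : rel T) (col : T -> T -> nat).

Definition edges : {set {set T}} :=
  [set e : {set T} | [exists x, exists y, adj x y && (e == [set x; y])]].

Definition num_edges : nat := #|edges|.

Definition ncolors (A : {set T}) : nat :=
  size (undup [seq col p.1 p.2 |
               p <- [seq (x, y) | x <- enum A, y <- enum A] & adj p.1 p.2]).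

Definition complete_on (A : {set T}) : bool :=
  [forall x in A, forall y in A, (x != y) ==> adj x y].

Definition mono_between (V1 V2 : {set T}) : Prop :=
  forall x1 y1 x2 y2, x1 \in V1 -> y1 \in V2 -> x2 \in V1 -> y2 \in V2 ->
    adj x1 y1 -> adj x2 y2 -> col x1 y1 = col x2 y2.

Definition rainbow_triangle (S : {set T}) : bool :=
  (#|S| == 3) && complete_on S &&
  [forall x in S, forall y in S, forall x' in S, forall y' in S,
     [&& x != y, x' != y' & [set x; y] != [set x'; y']] ==>
       (col x y != col x' y')].

Definition nonempty_partition (A V1 V2 : {set T}) : bool :=
  [&& V1 != set0, V2 != set0, [disjoint V1 & V2] & V1 :|: V2 == A].

Inductive inG0 (A : {set T}) : Prop :=
| G0_K1 : #|A| = 1 -> inG0 A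
| G0_split : forall V1 V2 : {set T},
    2 <= #|A| -> complete_on A -> ncolors A = #|A| - 1 ->
    nonempty_partition A V1 V2 -> mono_between V1 V2 ->
    inG0 V1 -> inG0 V2 -> inG0 A.

Inductive inG1 (A : {set T}) : Prop :=
| G1_rainbow : rainbow_triangle A -> inG1 A
| G1_split : forall V1 V2 : {set T},
    4 <= #|A| -> complete_on A -> ncolors A = #|A| ->
    nonempty_partition A V1 V2 -> mono_between V1 V2 ->
    inG1 V1 -> inG0 V2 -> inG1 A.

End EdgeColored.

(* Main.v *)
Require Import Defs.
From mathcomp Require Import all_boot zify.
Set Implicit Arguments. Unset Strict Implicit. Unset Printing Implicit Defensive.

Section S.
Variables (T : finType) (adj : rel T) (col : T -> T -> nat).
Hypothesis adjC : forall x y, adj x y = adj y x.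
Hypothesis adj_irr : forall x, ~~ adj x x.
Hypothesis colC : forall x y, col x y = col y x.
Implicit Types A B X V U W S : {set T}.

Definition cols (A : {set T}) : seq nat :=
  undup [seq col p.1 p.2 | p <- [seq (x, y) | x <- enum A, y <- enum A] & adj p.1 p.2].

Lemma ncolorsE A : ncolors adj col A = size (cols A). Proof. by []. Qed.

Lemma cols_uniq A : uniq (cols A). Proof. exact: undup_uniq. Qed.

Lemma mem_cols A a :
  reflect (exists x y, [/\ x \in A, y \in A, adj x y & col x y = a]) (a \in cols A).
Proof.
rewrite mem_undup; apply: (iffP mapP).
  move=> [[x y]]; rewrite mem_filter => /andP[/= ap /allpairsP[[x' y'] [/= xA yA [ex ey]]]] ->.
  subst x' y'; exists x, y; split => //; by rewrite -mem_enum.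
move=> [x [y [xA yA axy <-]]]; exists (x, y); last by [].
by rewrite mem_filter /= axy; apply/allpairsP; exists (x, y); rewrite !mem_enum.
Qed.

Lemma colsI A x y : x \in A -> y \in A -> adj x y -> col x y \in cols A.
Proof. by move=> xA yA axy; apply/mem_cols; exists x, y. Qed.

Lemma cols_sub B A : B \subset A -> {subset cols B <= cols A}.
Proof.
move=> sBA a /mem_cols [x [y [xB yB axy <-]]].
by apply: colsI => //; apply: (subsetP sBA).
Qed.

Lemma ncolors_sub B A : B \subset A -> ncolors adj col B <= ncolors adj col A.
Proof. by move=> sBA; apply: uniq_leq_size (cols_uniq _) (cols_sub sBA). Qed.

Definition eA (A : {set T}) := #|[set e in edges adj | e \subset A]|.
Definition deg (A : {set T}) v := #|[set u in A | adj v u]|.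

Lemma edgesP e : reflect (exists x y, adj x y /\ e = [set x; y]) (e \in edges adj).
Proof.
rewrite inE; apply: (iffP existsP) => [[x /existsP[y /andP[a /eqP ->]]]|[x [y [a ->]]]].
  by exists x, y.
by exists x; apply/existsP; exists y; rewrite a eqxx.
Qed.

Lemma edgesP' e : reflect (exists x y, adj x y /\ e = [set x; y])
  [exists x, exists y, adj x y && (e == [set x; y])].
Proof.
apply: (iffP existsP) => [[x /existsP[y /andP[a /eqP ->]]]|[x [y [a ->]]]].
  by exists x, y.
by exists x; apply/existsP; exists y; rewrite a eqxx.
Qed.

Lemma eA_del A v : v \in A -> eA A = eA (A :\ v) + deg A v.
Proof.
move=> vA; rewrite /eA /deg.
rewrite -(cardsID [set e : {set T} | v \in e] [set e in edges adj | e \subset A]).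
rewrite addnC; congr (_ + _).
  apply: eq_card => e; rewrite !inE subsetD1.
  by case: (v \in e); case: (e \subset A); rewrite /= ?andbF ?andbT.
rewrite -(@card_in_imset _ _ (fun u => [set v; u])); last first.
  move=> u w; rewrite !inE => /andP[_ avu] /andP[_ avw] /setP /(_ w).
  rewrite !inE eqxx orbT => /orP[/eqP wv|/eqP //].
  by move: avw; rewrite wv (negbTE (adj_irr v)).
apply: eq_card => e; rewrite in_setI !in_set -/(e \in edges adj); apply/idP/idP.
  move=> /andP[/andP[/edgesP'[x [y [axy ->]]] sA]]; rewrite !inE => /orP[]/eqP vx.
    subst x; apply/imsetP; exists y => //.
    by rewrite inE axy (subsetP sA) // !inE eqxx orbT.
  subst y; apply/imsetP; exists x; last by rewrite setUC.
  by rewrite inE adjC axy (subsetP sA) // !inE eqxx.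
move=> /imsetP[u]; rewrite inE => /andP[uA avu] ->.
rewrite !inE eqxx /= andbT; apply/andP; split; first by apply/edgesP'; exists v, u.
by apply/subsetP => x; rewrite !inE => /orP[]/eqP->.
Qed.

Lemma deg_le A v : deg A v <= #|A :\ v|.
Proof.
apply: subset_leq_card; apply/subsetP => u; rewrite !inE => /andP[uA avu].
rewrite uA andbT; apply/eqP => uv; move: avu; rewrite uv (negbTE (adj_irr v)).
by [].
Qed.

Lemma binS2 k : 'C(k.+1, 2) = 'C(k, 2) + k.
Proof. by rewrite binS bin1. Qed.

Lemma eA0 : eA set0 = 0.
Proof.
apply/eqP; rewrite cards_eq0; apply/eqP/setP => e; rewrite !inE.
apply/negP => /andP[/edgesP'[x [y [_ ->]]] /subsetP /(_ x)]; rewrite !inE eqxx.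
by move=> /(_ isT).
Qed.

Lemma card_ind (P : {set T} -> Prop) :
  (forall A, (forall B, #|B| < #|A| -> P B) -> P A) -> forall A, P A.
Proof.
move=> H A; move: {2}#|A| (leqnn #|A|) => k; elim: k A => [|k IH] A hA.
  apply: H => B; rewrite (leqNgt _ 0) in hA; lia.
apply: H => B hB; apply: IH; lia.
Qed.

Lemma eA_le A : eA A <= 'C(#|A|, 2).
Proof.
elim/card_ind: A => A IH.
case: (set_0Vmem A) => [->|[v vA]]; first by rewrite eA0.
rewrite (eA_del vA) (cardsD1 v A) vA add1n binS2.
have h1 := IH (A :\ v); have h2 := deg_le A v.
rewrite (cardsD1 v A) vA in h1; lia.
Qed.


Lemma completeP X x y : complete_on adj X -> x \in X -> y \in X -> x != y -> adj x y.
Proof.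
move=> /forallP /(_ x) /implyP h xX; move: (h xX) => /forallP /(_ y) /implyP h2 yX.
by move: (h2 yX) => /implyP.
Qed.

Lemma complete_sub X B : B \subset X -> complete_on adj X -> complete_on adj B.
Proof.
move=> sBX cX; apply/forallP => x; apply/implyP => xB; apply/forallP => y.
apply/implyP => yB; apply/implyP => xy.
by apply: (completeP cX) => //; apply: (subsetP sBX).
Qed.

Definition newcols A v := [seq a <- cols A | a \notin cols (A :\ v)].
Definition Pv A v := [set u in A | adj v u & col v u \notin cols (A :\ v)].

Lemma ncolors_del A v :
  ncolors adj col A <= ncolors adj col (A :\ v) + size (newcols A v).
Proof.
rewrite !ncolorsE -size_cat; apply: uniq_leq_size (cols_uniq _) _ => a aA.
rewrite mem_cat; case: (boolP (a \in cols (A :\ v))) => //= h.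
by rewrite mem_filter h.
Qed.

Lemma newcols_uniq A v : uniq (newcols A v).
Proof. exact: filter_uniq (cols_uniq _). Qed.

Lemma newcols_rep A v a : v \in A -> a \in newcols A v ->
  exists2 u, u \in Pv A v & col v u = a.
Proof.
move=> vA; rewrite mem_filter => /andP[na /mem_cols [x [y [xA yA axy ea]]]].
have [xv|xv] := eqVneq x v.
  by subst x; exists y => //; rewrite inE yA axy ea na.
have [yv|yv] := eqVneq y v.
  subst y; exists x; last by rewrite colC.
  by rewrite inE xA adjC axy colC ea na.
by move: na; rewrite -ea (colsI _ _ axy) // !inE ?xv ?yv ?xA ?yA.
Qed.

Lemma Pv_new A v u : v \in A -> u \in Pv A v -> col v u \in newcols A v.
Proof.
move=> vA; rewrite inE => /and3P[uA avu nu].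
by rewrite mem_filter nu colsI.
Qed.

Lemma Pv_neq A v u : u \in Pv A v -> u != v.
Proof.
rewrite inE => /and3P[_ avu _]; apply/eqP => uv; move: avu.
by rewrite uv (negbTE (adj_irr v)).
Qed.

Lemma newcols_Q A v u : v \in A ->
  size (newcols A v) <= #|[set w in Pv A v | col v w != col v u]|.+1.
Proof.
move=> vA; rewrite cardE -(size_map (col v)).
rewrite -[X in _ <= X]/(size (col v u :: map (col v) (enum [set w in Pv A v | col v w != col v u]))).
apply: uniq_leq_size (newcols_uniq _ _) _ => a an.
have [w wP ea] := newcols_rep vA an.
rewrite inE; have [->|ne] := eqVneq a (col v u) => //=.
by apply/mapP; exists w => //; rewrite mem_enum inE wP ea ne.
Qed.

Lemma newcols_P A v : v \in A -> size (newcols A v) <= #|Pv A v|.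
Proof.
move=> vA; rewrite cardE -(size_map (col v)).
apply: uniq_leq_size (newcols_uniq _ _) _ => a an.
have [w wP ea] := newcols_rep vA an.
by apply/mapP; exists w => //; rewrite mem_enum.
Qed.

Lemma Pv_deg A v : #|Pv A v| <= deg A v.
Proof.
apply: subset_leq_card; apply/subsetP => u; rewrite !inE.
by case/and3P => -> ->.
Qed.

Definition noRTat A v := forall u w, u \in A -> w \in A -> adj v u -> adj v w ->
  adj u w -> col v u != col v w -> col v u != col u w -> col v w != col u w -> False.

Lemma Pv_indep A v u w : v \in A -> noRTat A v -> u \in Pv A v -> w \in Pv A v ->
  col v u != col v w -> ~~ adj u w.
Proof.
move=> vA H uP wP cuw; apply/negP => auw.
have uv := Pv_neq uP; have wv := Pv_neq wP.
move: uP wP; rewrite !inE => /and3P[uA avu nu] /and3P[wA avw nw].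
have c : col u w \in cols (A :\ v) by apply: colsI => //; rewrite !inE ?uv ?wv.
apply: (H u w) => //.
  by apply/eqP => e; move: nu; rewrite e c.
by apply/eqP => e; move: nw; rewrite e c.
Qed.

Lemma lemV A X : complete_on adj X ->
  (forall v, v \in A -> v \notin X -> noRTat A v) ->
  (exists v, (v \in A) && (v \notin X)) ->
  exists v, [/\ v \in A, v \notin X & deg A v + size (newcols A v) <= #|A|].
Proof.
move=> cX H [v0 v0P].
case: (boolP [exists v, [&& v \in A, v \notin X & deg A v + size (newcols A v) <= #|A|]]).
  by move=> /existsP[v /and3P[]] *; exists v.
move=> hall.
have hv : forall v, v \in A -> v \notin X -> #|A| < deg A v + size (newcols A v).
  move=> v vA vX; rewrite ltnNge; apply/negP => hle.
  by move/negP: hall; apply; apply/existsP; exists v; rewrite vA vX hle.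
case: (@arg_maxnP _ v0 (fun v => (v \in A) && (v \notin X)) (fun v => size (newcols A v)) v0P) => v /andP[vA vX] vmax.
have hv1 := hv v vA vX; have dle := deg_le A v.
rewrite (cardsD1 v A) vA in hv1 dle.
have nu := newcols_uniq A v.
case E: (newcols A v) nu hv1 => [|a [|b s]] /=; rewrite ?E /=; [lia|lia|].
rewrite inE => /andP[/norP[ab _] _] _.
have aN : a \in newcols A v by rewrite E inE eqxx.
have bN : b \in newcols A v by rewrite E !inE eqxx orbT.
have [ua uaP ea] := newcols_rep vA aN.
have [ub ubP eb] := newcols_rep vA bN.
have [u [uP uX]] : exists u, u \in Pv A v /\ u \notin X.
  case: (boolP (ua \in X)) => uaX; last by exists ua.
  case: (boolP (ub \in X)) => ubX; last by exists ub.
  exfalso.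
  have cab : col v ua != col v ub by rewrite ea eb.
  have := Pv_indep vA (H v vA vX) uaP ubP cab; rewrite (completeP cX) //.
  by apply/eqP => e; move: cab; rewrite e eqxx.
have uA : u \in A by move: uP; rewrite inE => /andP[].
pose Q := [set w in Pv A v | col v w != col v u].
have hQ := newcols_Q u vA.
have hu := hv u uA uX.
have umax : size (newcols A u) <= size (newcols A v) by apply: vmax; rewrite uA uX.
pose N := [set w in A | adj u w].
have Qin w : (w \in Q) = (w \in Pv A v) && (col v w != col v u) by rewrite inE.
have Nin w : (w \in N) = (w \in A) && adj u w by rewrite inE.
have NQ : N :&: Q = set0.
  apply/setP => w; rewrite in_setI Qin Nin in_set0; apply/negP => /andP[/andP[wA auw] /andP[wP cw]].
  have := Pv_indep vA (H v vA vX) uP wP; rewrite auw eq_sym => /(_ cw).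
  by [].
have NQs : N :|: Q \subset A :\ u.
  apply/subsetP => w; rewrite in_setU Qin Nin in_setD1 => /orP[/andP[wA auw]|/andP[wP cw]].
    rewrite wA andbT; apply/eqP => wu; move: auw; rewrite wu (negbTE (adj_irr u)).
    by [].
  move: (wP); rewrite inE => /andP[-> _]; rewrite andbT.
  by apply/eqP => wu; move: cw; rewrite wu eqxx.
exfalso; have := subset_leq_card NQs; rewrite cardsU NQ cards0 subn0.
have c1 := cardsD1 u A; rewrite uA in c1.
have c2 : #|N| = deg A u by [].
have hQ' : size (newcols A v) <= #|Q|.+1 := hQ.
move: c1 c2 hQ' hu umax; clear; lia.
Qed.


Definition rts A := [set S | rainbow_triangle adj col S & S \subset A].

Lemma rtsP A S : (S \in rts A) = rainbow_triangle adj col S && (S \subset A).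
Proof. by rewrite inE. Qed.

Lemma tri_rt x y z : x != y -> x != z -> y != z -> adj x y -> adj x z -> adj y z ->
  col x y != col x z -> col x y != col y z -> col x z != col y z ->
  rainbow_triangle adj col [set x; y; z].
Proof.
move=> xy xz yz axy axz ayz c1 c2 c3.
have c1' : col x z != col x y by rewrite eq_sym.
have c2' : col y z != col x y by rewrite eq_sym.
have c3' : col y z != col x z by rewrite eq_sym.
have xy' : y != x by rewrite eq_sym.
have xz' : z != x by rewrite eq_sym.
have yz' : z != y by rewrite eq_sym.
apply/andP; split; first (apply/andP; split).
- by rewrite -setUA cardsU1 cards2 !inE negb_or xy xz yz.
- apply/forallP => a; apply/implyP; rewrite !inE -?orbA => /or3P[]/eqP->;
  apply/forallP => b; apply/implyP; rewrite !inE -?orbA => /or3P[]/eqP->;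
  by rewrite ?eqxx //= ?(adjC y x) ?(adjC z x) ?(adjC z y) ?axy ?axz ?ayz ?implybT.
- apply/forallP => a; apply/implyP; rewrite !inE -?orbA => /or3P[]/eqP->;
  apply/forallP => b; apply/implyP; rewrite !inE -?orbA => /or3P[]/eqP->;
  apply/forallP => a'; apply/implyP; rewrite !inE -?orbA => /or3P[]/eqP->;
  apply/forallP => b'; apply/implyP; rewrite !inE -?orbA => /or3P[]/eqP->;
  rewrite ?eqxx ?andbF //= ?(setUC [set y] [set x]) ?(setUC [set z] [set x])
    ?(setUC [set z] [set y]) ?eqxx ?andbF //
    ?[col y x]colC ?[col z x]colC ?[col z y]colC
    ?c1 ?c2 ?c3 ?c1' ?c2' ?c3' ?implybT //.
Qed.

Lemma rt_card S : rainbow_triangle adj col S -> #|S| = 3.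
Proof. by case/andP => /andP[/eqP]. Qed.

Lemma rt_complete S : rainbow_triangle adj col S -> complete_on adj S.
Proof. by case/andP => /andP[]. Qed.

Lemma rt_cols S x y x' y' : rainbow_triangle adj col S ->
  x \in S -> y \in S -> x' \in S -> y' \in S -> x != y -> x' != y' ->
  [set x; y] != [set x'; y'] -> col x y != col x' y'.
Proof.
case/andP => _ /forallP /(_ x) /implyP h xS; move/(_ xS)/forallP/(_ y)/implyP: h => h yS.
move/(_ yS)/forallP/(_ x')/implyP: h => h x'S; move/(_ x'S)/forallP/(_ y')/implyP: h => h y'S.
move=> a b c; by move/(_ y'S)/implyP: h; apply; rewrite a b c.
Qed.

Lemma rt_noRT A v : v \in A -> (forall S, S \in rts A -> v \notin S) -> noRTat A v.
Proof.
move=> vA H u w uA wA avu avw auw c1 c2 c3.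
have vu : v != u by apply/eqP => e; move: avu; rewrite e (negbTE (adj_irr u)).
have vw : v != w by apply/eqP => e; move: avw; rewrite e (negbTE (adj_irr w)).
have uw : u != w by apply/eqP => e; move: auw; rewrite e (negbTE (adj_irr w)).
have hS : [set v; u; w] \in rts A.
  rewrite rtsP tri_rt //=.
  by apply/subsetP => x; rewrite !inE -?orbA => /or3P[]/eqP->.
by move: (H _ hS); rewrite !inE eqxx.
Qed.


Lemma rts_uniq A S S' : #|rts A| <= 1 -> S \in rts A -> S' \in rts A -> S' = S.
Proof. by move/card_le1_eqP => h sA s'A; apply: h. Qed.

Lemma rts_sub B A : B \subset A -> rts B \subset rts A.
Proof.
move=> sBA; apply/subsetP => S; rewrite !rtsP => /andP[-> sSB] /=.
exact: subset_trans sSB sBA.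
Qed.

Lemma ncolors0 : ncolors adj col set0 = 0.
Proof.
rewrite ncolorsE; case E: (cols set0) => [|a s] //.
have : a \in cols set0 by rewrite E inE eqxx.
by case/mem_cols => x [y [] ]; rewrite inE.
Qed.

Lemma c_le_e A : ncolors adj col A <= eA A.
Proof.
elim/card_ind: A => A IH.
case: (set_0Vmem A) => [->|[v vA]]; first by rewrite ncolors0.
have h1 := ncolors_del A v; have h2 := newcols_P vA; have h3 := Pv_deg A v.
have h4 : #|A :\ v| < #|A| by rewrite (cardsD1 v A) vA.
have h5 := IH _ h4; rewrite (eA_del vA); lia.
Qed.

Lemma deg_complete A v : complete_on adj A -> v \in A -> deg A v = #|A :\ v|.
Proof.
move=> cA vA; rewrite /deg; apply: eq_card => u; rewrite !inE.
case: (boolP (u \in A)) => uA; rewrite ?andbF ?andbT //.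
have [->|uv] := eqVneq u v; first by rewrite (negbTE (adj_irr v)).
by rewrite (completeP cA) // eq_sym.
Qed.

Lemma eA_complete A : complete_on adj A -> eA A = 'C(#|A|, 2).
Proof.
elim/card_ind: A => A IH cA.
case: (set_0Vmem A) => [->|[v vA]]; first by rewrite eA0 cards0.
rewrite (eA_del vA) (deg_complete cA vA) IH; last first.
- by apply: complete_sub cA; apply: subD1set.
- by rewrite (cardsD1 v A) vA.
by rewrite (cardsD1 v A) vA add1n binS2.
Qed.

Lemma fstep A v : v \in A -> eA A + ncolors adj col A <=
  eA (A :\ v) + ncolors adj col (A :\ v) + deg A v + size (newcols A v).
Proof. move=> vA; have := ncolors_del A v; rewrite (eA_del vA); lia. Qed.

Lemma complete0 : complete_on adj set0.
Proof. by apply/forallP => x; rewrite inE. Qed.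

Lemma U0 A : rts A = set0 -> 0 < #|A| -> (eA A + ncolors adj col A).+1 <= 'C(#|A|.+1, 2).
Proof.
elim/card_ind: A => A IH r0 A0.
have [v vA] : exists v, v \in A by apply/set0Pn; rewrite -card_gt0.
have hc := c_le_e A; have he := eA_le A.
case: (ltnP 1 #|A|) => hA; last first.
  have -> : #|A| = 1 by lia.
  move: he; have -> : #|A| = 1 by lia.
  have b1 : 'C(1,2) = 0 := erefl; have b2 : 'C(2,2) = 1 := erefl.
  rewrite b1 b2; lia.
have [w [wA _ hw]] : exists w, [/\ w \in A, w \notin set0 & deg A w + size (newcols A w) <= #|A|].
  apply: (lemV complete0).
    move=> u uA _; apply: rt_noRT => // S; by rewrite r0 inE.
  by exists v; rewrite vA inE.
have hs := fstep wA.
have c1 : #|A| = #|A :\ w|.+1 by rewrite (cardsD1 w A) wA.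
have IH' := IH (A :\ w).
have r1 : rts (A :\ w) = set0.
  by apply/eqP; rewrite -subset0 -r0; apply: rts_sub; apply: subD1set.
have k0 : 0 < #|A :\ w| by lia.
have lt1 : #|A :\ w| < #|A| by rewrite c1.
have := IH' lt1 r1 k0.
rewrite c1 in hw *; rewrite binS2; have b1 := binS2 #|A :\ w|.+1; have b2 := binS2 #|A :\ w|; move: hs hw; lia.
Qed.


Lemma smallbin n : n <= 3 -> 2 * 'C(n, 2) <= 'C(n.+1, 2).
Proof. by case: n => [|[|[|[|]]]]. Qed.

Lemma U1 A : #|rts A| <= 1 -> eA A + ncolors adj col A <= 'C(#|A|.+1, 2).
Proof.
elim/card_ind: A => A IH r1.
have hc := c_le_e A; have he := eA_le A.
case: (set_0Vmem (rts A)) => [r0|[S SA]].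
  case: (set_0Vmem A) => [->|[v vA]]; first by rewrite eA0 ncolors0.
  have A0 : 0 < #|A| by rewrite card_gt0; apply/set0Pn; exists v.
  have := U0 r0 A0; lia.
move: (SA); rewrite rtsP => /andP[rS sSA].
case: (boolP (A \subset S)) => hAS.
  have hA3 : #|A| <= 3 by rewrite -(rt_card rS); apply: subset_leq_card.
  have := smallbin hA3; lia.
case/subsetPn: hAS => v vA vS.
have [w [wA wS hw]] : exists w, [/\ w \in A, w \notin S & deg A w + size (newcols A w) <= #|A|].
  apply: (lemV (rt_complete rS)).
    move=> u uA uS; apply: rt_noRT => // S' S'A.
    by rewrite (rts_uniq r1 SA S'A).
  by exists v; rewrite vA vS.
have hs := fstep wA.
have c1 : #|A| = #|A :\ w|.+1 by rewrite (cardsD1 w A) wA.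
have r1' : #|rts (A :\ w)| <= 1.
  apply: leq_trans r1; apply: subset_leq_card; apply: rts_sub; apply: subD1set.
have lt1 : #|A :\ w| < #|A| by rewrite c1.
have := IH _ lt1 r1'.
rewrite c1 in hw *.
have b1 := binS2 #|A :\ w|.+1; have b2 := binS2 #|A :\ w|; move: hs hw; lia.
Qed.


Lemma np_unpack B V1 V2 : nonempty_partition B V1 V2 ->
  [/\ exists p, p \in V1, exists q, q \in V2,
      (forall x, x \in V1 -> x \in V2 = false) &
      (forall x, (x \in B) = (x \in V1) || (x \in V2))].
Proof.
case/and4P => n1 n2 dis /eqP e; split.
- by case/set0Pn: n1 => p; exists p.
- by case/set0Pn: n2 => q; exists q.
- by move=> x; apply: disjointFr.
- by move=> x; rewrite -e in_setU.
Qed.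

Lemma np_mk B V1 V2 : (exists p, p \in V1) -> (exists q, q \in V2) ->
  (forall x, x \in V1 -> x \in V2 = false) ->
  (forall x, (x \in B) = (x \in V1) || (x \in V2)) -> nonempty_partition B V1 V2.
Proof.
move=> [p pV] [q qV] dis e; apply/and4P; split.
- by apply/set0Pn; exists p.
- by apply/set0Pn; exists q.
- rewrite -setI_eq0; apply/eqP/setP => x; rewrite !inE.
  by case: (boolP (x \in V1)) => // /dis ->.
- by apply/eqP/setP => x; rewrite in_setU e.
Qed.

Lemma np_card B V1 V2 : nonempty_partition B V1 V2 -> #|B| = #|V1| + #|V2|.
Proof.
case/and4P => _ _ dis /eqP <-.
by rewrite cardsU (disjoint_setI0 dis) cards0 subn0.
Qed.

Lemma np_sub1 B V1 V2 : nonempty_partition B V1 V2 -> V1 \subset B.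
Proof. by case/np_unpack => _ _ _ e; apply/subsetP => x; rewrite e => ->. Qed.

Lemma np_sub2 B V1 V2 : nonempty_partition B V1 V2 -> V2 \subset B.
Proof. by case/np_unpack => _ _ _ e; apply/subsetP => x; rewrite e orbC => ->. Qed.

Lemma mono_sym V1 V2 : mono_between adj col V1 V2 -> mono_between adj col V2 V1.
Proof.
move=> m x1 y1 x2 y2 h1 h2 h3 h4 a1 a2.
by rewrite colC (colC x2); apply: m => //; rewrite adjC.
Qed.

Lemma ncolors_lt B' B a : B' \subset B -> a \in cols B -> a \notin cols B' ->
  ncolors adj col B' < ncolors adj col B.
Proof.
move=> sB aB na; rewrite !ncolorsE.
have -> : (size (cols B')).+1 = size (a :: cols B') by [].
apply: uniq_leq_size; first by rewrite /= na cols_uniq.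
move=> b; rewrite inE => /orP[/eqP->//|]; exact: cols_sub.
Qed.

Lemma cross_cols B V1 V2 p q k1 k2 : nonempty_partition B V1 V2 ->
  mono_between adj col V1 V2 -> p \in V1 -> q \in V2 -> adj p q ->
  k1 + k2 + 1 <= ncolors adj col B -> ncolors adj col V1 <= k1 ->
  ncolors adj col V2 <= k2 ->
  [/\ col p q \notin cols V1, col p q \notin cols V2,
      ncolors adj col V1 = k1 & ncolors adj col V2 = k2].
Proof.
move=> np m pV qV apq hB h1 h2.
case/np_unpack: (np) => _ _ dis e.
have sub : {subset cols B <= cols V1 ++ cols V2 ++ [:: col p q]}.
  move=> a /mem_cols [x [y [xB yB axy <-]]]; rewrite !mem_cat.
  move: xB yB; rewrite !e => /orP[xV|xV] /orP[yV|yV].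
  - by rewrite (colsI xV yV axy).
  - by rewrite (m x y p q) // inE eqxx !orbT.
  - by rewrite colC (m y x p q) // ?inE ?eqxx ?orbT // adjC.
  - by rewrite (colsI xV yV axy) ?orbT.
have hs : size (cols B) <= size (cols V1) + size (cols V2) + 1.
  rewrite -addnA -[1]/(size [:: col p q]) -!size_cat.
  exact: uniq_leq_size (cols_uniq _) sub.
rewrite !ncolorsE in hB h1 h2 *.
have n1 : col p q \notin cols V1.
  apply/negP => c; have : size (cols B) <= size (cols V1 ++ cols V2).
    apply: uniq_leq_size (cols_uniq _) _ => a aB; move: (sub a aB).
    by rewrite !mem_cat inE => /or3P[->|->|/eqP->]; rewrite ?c ?orbT.
  rewrite size_cat; lia.
have n2 : col p q \notin cols V2.
  apply/negP => c; have : size (cols B) <= size (cols V1 ++ cols V2).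
    apply: uniq_leq_size (cols_uniq _) _ => a aB; move: (sub a aB).
    by rewrite !mem_cat inE => /or3P[->|->|/eqP->]; rewrite ?c ?orbT.
  rewrite size_cat; lia.
split => //; lia.
Qed.


Lemma inD1 A v x : (x \in A :\ v) = (x != v) && (x \in A).
Proof. by rewrite !inE. Qed.

Lemma step1 A v : v \in A -> complete_on adj (A :\ v) -> noRTat A v ->
  #|A| <= deg A v + size (newcols A v) ->
  complete_on adj A /\ size (newcols A v) = 1.
Proof.
move=> vA cA' Hv hd.
have Pv_in u : u \in Pv A v -> u \in A :\ v.
  move=> uP; rewrite inD1 (Pv_neq uP); by move: uP; rewrite inE => /andP[->].
have s1 : size (newcols A v) <= 1.
  have nu := newcols_uniq A v.
  case E: (newcols A v) nu => [|a [|b s]] //=.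
  rewrite inE => /andP[/norP[ab _] _].
  have aN : a \in newcols A v by rewrite E inE eqxx.
  have bN : b \in newcols A v by rewrite E !inE eqxx orbT.
  have [ua uaP ea] := newcols_rep vA aN.
  have [ub ubP eb] := newcols_rep vA bN.
  have cab : col v ua != col v ub by rewrite ea eb.
  have := Pv_indep vA Hv uaP ubP cab; rewrite (completeP cA') ?Pv_in //.
  by apply/eqP => e; move: cab; rewrite e eqxx.
have dle := deg_le A v.
have c1 : #|A| = #|A :\ v|.+1 by rewrite (cardsD1 v A) vA.
have dq : deg A v = #|A :\ v| by lia.
split; last by lia.
have eN : [set u in A | adj v u] = A :\ v.
  apply/eqP; rewrite eqEcard -/(deg A v) dq leqnn andbT.
  apply/subsetP => u; rewrite !inE => /andP[uA avu]; rewrite uA andbT.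
  by apply/eqP => e; move: avu; rewrite e (negbTE (adj_irr v)).
have av u : u \in A -> u != v -> adj v u.
  move=> uA uv; have : u \in A :\ v by rewrite inD1 uv uA.
  by rewrite -eN inE => /andP[].
apply/forallP => x; apply/implyP => xA; apply/forallP => y; apply/implyP => yA.
apply/implyP => xy.
have [xv|xv] := eqVneq x v; first by subst x; apply: av; rewrite // eq_sym.
have [yv|yv] := eqVneq y v; first by subst y; rewrite adjC; apply: av.
by apply: (completeP cA') => //; rewrite inD1 ?xv ?yv.
Qed.

Section Step.
Variables (A : {set T}) (v : T) (a : nat).
Hypotheses (cA : complete_on adj A) (Hv : noRTat A v) (vA : v \in A)
  (na : a \notin cols (A :\ v)).

Lemma Kc u w : u \in A :\ v -> col v u = a -> w \in A :\ v -> col v w != a ->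
  col u w = col v w.
Proof.
move=> uA' eu wA' ew.
have uw : u != w by apply/eqP => e; move: ew; rewrite -e eu eqxx.
move: (uA') (wA'); rewrite !inD1 => /andP[uv uA] /andP[wv wA].
have avu : adj v u by apply: (completeP cA) => //; rewrite eq_sym.
have avw : adj v w by apply: (completeP cA) => //; rewrite eq_sym.
have auw : adj u w by apply: (completeP cA).
have cuw : col u w \in cols (A :\ v) by apply: colsI.
apply/eqP; apply/negPn/negP => ne.
have c1 : col v u != col v w by rewrite eu eq_sym.
have c2 : col v u != col u w by rewrite eu; apply/eqP => e; move: na; rewrite e cuw.
have c3 : col v w != col u w by rewrite eq_sym.
exact: (Hv uA wA avu avw auw c1 c2 c3).
Qed.

Lemma mono_add V1 V2 u0 : V1 \subset A :\ v -> V2 \subset A :\ v ->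
  (forall x, x \in V1 -> x \in V2 = false) -> mono_between adj col V1 V2 ->
  u0 \in V1 -> col v u0 = a -> (forall y, y \in V2 -> col v y != a) ->
  mono_between adj col (v |: V1) V2.
Proof.
move=> s1 s2 dis m u0V eu0 hV2.
have hx x y : x \in v |: V1 -> y \in V2 -> adj x y ->
    exists x', [/\ x' \in V1, adj x' y & col x y = col x' y].
  rewrite !inE => /orP[/eqP->|xV] yV axy; last by exists x.
  exists u0; split => //.
    apply: (completeP cA).
    - by move: (subsetP s1 _ u0V); rewrite inD1 => /andP[].
    - by move: (subsetP s2 _ yV); rewrite inD1 => /andP[].
    by apply/eqP => e; move: (dis _ u0V); rewrite e yV.
  by rewrite (Kc (subsetP s1 _ u0V) eu0 (subsetP s2 _ yV) (hV2 _ yV)).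
move=> x1 y1 x2 y2 h1 h2 h3 h4 a1 a2.
have [x1' [x1V ax1 ->]] := hx _ _ h1 h2 a1.
have [x2' [x2V ax2 ->]] := hx _ _ h3 h4 a2.
exact: m.
Qed.

Lemma step2 V1 V2 : nonempty_partition (A :\ v) V1 V2 ->
  (forall p q, p \in V1 -> q \in V2 -> col p q \notin cols V1 /\ col p q \notin cols V2) ->
  (exists w0, (w0 \in A :\ v) && (col v w0 != a)) ->
  (forall y, y \in V2 -> col v y != a) \/ (forall x, x \in V1 -> col v x != a).
Proof.
move=> np hx [w0 /andP[w0A ew0]].
case/np_unpack: (np) => _ _ dis e.
case: (boolP [exists y in V2, col v y == a]) => [/existsP[u2 /andP[u2V /eqP eu2]]|h];
  last by left => y yV; apply/negP => c; move/negP: h; apply; apply/existsP; exists y; rewrite yV c.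
right => u1 u1V; apply/negP => /eqP eu1.
have u1A : u1 \in A :\ v by rewrite e u1V.
have u2A : u2 \in A :\ v by rewrite e u2V orbT.
have k1 := Kc u1A eu1 w0A ew0.
have k2 := Kc u2A eu2 w0A ew0.
have adjA x y : x \in A :\ v -> y \in A :\ v -> x != y -> adj x y.
  by rewrite !inD1 => /andP[_ ?] /andP[_ ?]; apply: (completeP cA).
have neq u : col v u = a -> u != w0 by move=> eu; apply/eqP => ee; move: ew0; rewrite -ee eu eqxx.
move: (w0A); rewrite e => /orP[wV|wV].
- have c1 : col u1 w0 \in cols V1 by apply: colsI => //; apply: adjA => //; apply: neq.
  have [c2 _] := hx w0 u2 wV u2V.
  by move: c2; rewrite colC k2 -k1 c1.
- have c1 : col u2 w0 \in cols V2 by apply: colsI => //; apply: adjA => //; apply: neq.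
  have [_ c2] := hx u1 w0 u1V wV.
  by move: c2; rewrite k1 -k2 c1.
Qed.

End Step.


Lemma np_sym B V1 V2 : nonempty_partition B V1 V2 -> nonempty_partition B V2 V1.
Proof.
case/np_unpack => h1 h2 dis e; apply: np_mk => // x.
  by move=> xV; apply/negbTE/negP => xV1; move: (dis _ xV1); rewrite xV.
by rewrite e orbC.
Qed.

Lemma np_add B w V1 V2 : w \in B -> nonempty_partition (B :\ w) V1 V2 ->
  nonempty_partition B (w |: V1) V2.
Proof.
move=> wB /np_unpack [[p pV] [q qV] dis e]; apply: np_mk.
- by exists w; rewrite !inE eqxx.
- by exists q.
- move=> x; rewrite !inE => /orP[/eqP->|/dis //].
  by apply/negbTE/negP => wV; move: (e w); rewrite wV orbT !inE eqxx.
- move=> x; rewrite in_setU1; have [->|xw] := eqVneq x w; first by rewrite wB.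
  by rewrite /= -e inD1 xw.
Qed.

Lemma c_bound0 B : rts B = set0 -> 0 < #|B| -> complete_on adj B ->
  ncolors adj col B < #|B|.
Proof.
move=> r0 B0 cB; have := U0 r0 B0; rewrite (eA_complete cB) binS2; lia.
Qed.

Lemma c_bound1 B : #|rts B| <= 1 -> complete_on adj B -> ncolors adj col B <= #|B|.
Proof.
move=> r1 cB; have := U1 r1; rewrite (eA_complete cB) binS2; lia.
Qed.

Lemma cross_all B V1 V2 k1 k2 : nonempty_partition B V1 V2 -> complete_on adj B ->
  mono_between adj col V1 V2 ->
  k1 + k2 + 1 <= ncolors adj col B -> ncolors adj col V1 <= k1 ->
  ncolors adj col V2 <= k2 ->
  [/\ (forall p q, p \in V1 -> q \in V2 -> col p q \notin cols V1 /\ col p q \notin cols V2),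
      ncolors adj col V1 = k1 & ncolors adj col V2 = k2].
Proof.
move=> np cB m hB h1 h2.
case/np_unpack: (np) => [[p pV] [q qV] dis e].
have adjB x y : x \in V1 -> y \in V2 -> adj x y.
  move=> xV yV; apply: (completeP cB); rewrite ?e ?xV ?yV ?orbT //.
  by apply/eqP => ee; move: (dis _ xV); rewrite ee yV.
have [n1 n2 e1 e2] := cross_cols np m pV qV (adjB _ _ pV qV) hB h1 h2.
split => // p' q' p'V q'V.
by rewrite (m p' q' p q) ?adjB.
Qed.

Lemma G1_has_rt B : inG1 adj col B -> exists R, R \in rts B.
Proof.
elim => [B' rB|B' V1 V2 _ _ _ np _ _ [R RV] _].
  by exists B'; rewrite rtsP rB subxx.
exists R; move: RV; rewrite !rtsP => /andP[-> sR] /=.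
exact: subset_trans sR (np_sub1 np).
Qed.


Lemma single_in (w x : T) : (x \in [set w]) = (x == w).
Proof. by rewrite inE. Qed.

Lemma np_single B (w u : T) : w \in B -> u \in B :\ w -> nonempty_partition B (B :\ w) [set w].
Proof.
move=> wB uB; apply: np_mk.
- by exists u.
- by exists w; rewrite inE.
- by move=> x; rewrite inD1 single_in => /andP[/negbTE].
- move=> x; rewrite inD1 single_in; have [->|xw] := eqVneq x w; by rewrite /= ?orbF ?orbT ?wB.
Qed.

Lemma bin1_2 : 'C(1, 2) = 0. Proof. by []. Qed.

Lemma G0claim A : rts A = set0 -> 0 < #|A| ->
  'C(#|A|.+1, 2) <= (eA A + ncolors adj col A).+1 ->
  [/\ inG0 adj col A, complete_on adj A & ncolors adj col A = #|A| - 1].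
Proof.
elim/card_ind: A => A IH r0 A0 hf.
have [v vA] : exists v, v \in A by apply/set0Pn; rewrite -card_gt0.
have hc := c_le_e A; have he := eA_le A.
case: (ltnP 1 #|A|) => hA; last first.
  have e1 : #|A| = 1 by lia.
  have cA : complete_on adj A.
    move/eqP: (e1) => /cards1P [z Az].
    apply/forallP => x; apply/implyP => xA; apply/forallP => y; apply/implyP => yA.
    by move: xA yA; rewrite Az !inE => /eqP-> /eqP->; rewrite eqxx.
  split => //; first exact: G0_K1.
  by move: he hc; rewrite e1 bin1_2; lia.
have [w [wA _ hw]] : exists w, [/\ w \in A, w \notin set0 & deg A w + size (newcols A w) <= #|A|].
  apply: (lemV complete0).
    by move=> u uA _; apply: rt_noRT => // S; rewrite r0 inE.
  by exists v; rewrite vA inE.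
have HvA : noRTat A w by apply: rt_noRT => // S; rewrite r0 inE.
have c1 : #|A| = #|A :\ w|.+1 by rewrite (cardsD1 w A) wA.
have hs := fstep wA.
have r0' : rts (A :\ w) = set0.
  by apply/eqP; rewrite -subset0 -r0; apply: rts_sub; apply: subD1set.
have A'0 : 0 < #|A :\ w| by lia.
have b1 := binS2 #|A :\ w|.+1; have b2 := binS2 #|A :\ w|.
have hf' : 'C(#|A :\ w|.+1, 2) <= (eA (A :\ w) + ncolors adj col (A :\ w)).+1.
  by move: hf hs hw; rewrite c1; lia.
have lt1 : #|A :\ w| < #|A| by rewrite c1.
have [iA' cA' nA'] := IH _ lt1 r0' A'0 hf'.
have eA' := eA_complete cA'.
have hd : #|A| <= deg A w + size (newcols A w).
  by move: hf hs; rewrite c1 eA' nA'; lia.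
have [cA s1] := step1 wA cA' HvA hd.
case E: (newcols A w) s1 => [|a [|]] // _.
have aN : a \in newcols A w by rewrite E inE eqxx.
move: (aN); rewrite mem_filter => /andP[na aA].
have [u0 u0P eu0] := newcols_rep wA aN.
have u0A' : u0 \in A :\ w.
  by rewrite inD1 (Pv_neq u0P); move: u0P; rewrite inE => /andP[->].
have ncA : ncolors adj col A = #|A| - 1.
  have := ncolors_del A w; rewrite E /=.
  have := ncolors_lt (subD1set A w) aA na; lia.
case: (boolP [exists w0, (w0 \in A :\ w) && (col w w0 != a)]) => [/existsP hW | hW]; last first.
  split => //; apply: (@G0_split _ _ _ _ (A :\ w) [set w]) => //.
  - exact: np_single u0A'.
  - move=> x1 y1 x2 y2 h1; rewrite single_in => /eqP-> h3; rewrite single_in => /eqP-> _ _.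
    have ha x : x \in A :\ w -> col x w = a.
      move=> xA; rewrite colC; apply/eqP; apply/negPn/negP => ne.
      by move/negP: hW; apply; apply/existsP; exists x; rewrite xA ne.
    by rewrite !ha.
  - by apply: G0_K1; rewrite cards1.
split => //.
case: iA' => [K1 | V1 V2 _ _ _ np m i1 i2].
  have : 1 < #|A :\ w|.
    case: hW => w0 /andP[w0A ew0]; apply/card_gt1P; exists u0, w0; split => //.
    by apply/eqP => e; move: ew0; rewrite -e eu0 eqxx.
  by rewrite K1.
case/np_unpack: (np) => [[p pV] [q qV] dis e].
have s1 : V1 \subset A := subset_trans (np_sub1 np) (subD1set A w).
have s2 : V2 \subset A := subset_trans (np_sub2 np) (subD1set A w).
have rV B : B \subset A -> rts B = set0.
  by move=> sB; apply/eqP; rewrite -subset0 -r0; apply: rts_sub.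
have V10 : 0 < #|V1| by rewrite card_gt0; apply/set0Pn; exists p.
have V20 : 0 < #|V2| by rewrite card_gt0; apply/set0Pn; exists q.
have cV1 := complete_sub s1 cA; have cV2 := complete_sub s2 cA.
have bV1 := c_bound0 (rV _ s1) V10 cV1.
have bV2 := c_bound0 (rV _ s2) V20 cV2.
have hcard := np_card np.
have hB : #|V1| - 1 + (#|V2| - 1) + 1 <= ncolors adj col (A :\ w).
  by rewrite nA' hcard; move: V10 V20; clear; lia.
have h1 : ncolors adj col V1 <= #|V1| - 1 by move: bV1; clear; lia.
have h2 : ncolors adj col V2 <= #|V2| - 1 by move: bV2; clear; lia.
have [hx nV1 nV2] := cross_all np cA' m hB h1 h2.
have key X Y : nonempty_partition (A :\ w) X Y -> mono_between adj col X Y ->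
    inG0 adj col Y -> ncolors adj col X = #|X| - 1 ->
    (forall y, y \in Y -> col w y != a) -> inG0 adj col A.
  move=> npXY mXY iY nX hY.
  case/np_unpack: (npXY) => [[p' p'X] [q' q'Y] disXY eXY].
  have u0X : u0 \in X.
    move: (u0A'); rewrite eXY => /orP[//|u0Y].
    by move: (hY _ u0Y); rewrite eu0 eqxx.
  have sX := np_sub1 npXY; have sY := np_sub2 npXY.
  have mono' := mono_add cA HvA wA na sX sY disXY mXY u0X eu0 hY.
  have wX : w \notin X by apply/negP => /(subsetP sX); rewrite !inE eqxx.
  have cX' : #|w |: X| = #|X|.+1 by rewrite cardsU1 wX.
  have sX' : w |: X \subset A.
    apply/subsetP => x; rewrite in_setU1 => /orP[/eqP->//|xX].
    by move: (subsetP sX _ xX); rewrite inD1 => /andP[].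
  have hcXY := np_card npXY.
  have Y0 : 0 < #|Y| by rewrite card_gt0; apply/set0Pn; exists q'.
  have X0 : 0 < #|X| by rewrite card_gt0; apply/set0Pn; exists p'.
  have ltX' : #|w |: X| < #|A| by rewrite cX' c1 hcXY; move: Y0; clear; lia.
  have cX'c := complete_sub sX' cA.
  have aX' : a \in cols (w |: X).
    rewrite -eu0; apply: colsI; rewrite ?in_setU1 ?eqxx ?u0X ?orbT //.
    apply: (completeP cA) => //; first by move: (subsetP sX _ u0X); rewrite inD1 => /andP[].
    by rewrite eq_sym; move: (subsetP sX _ u0X); rewrite inD1 => /andP[].
  have naX : a \notin cols X by apply/negP => /(cols_sub sX); apply/negP.
  have ltc := ncolors_lt (subsetUr [set w] X) aX' naX.
  have X'0 : 0 < #|w |: X| by rewrite cX'.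
  have bnd : 'C(#|w |: X|.+1, 2) <= (eA (w |: X) + ncolors adj col (w |: X)).+1.
    rewrite (eA_complete cX'c) cX'.
    have := binS2 #|X|.+1; have := binS2 #|X|; move: ltc nX X0; clear; lia.
  have [iX' _ _] := IH _ ltX' (rV _ sX') X'0 bnd.
  apply: (@G0_split _ _ _ _ (w |: X) Y) => //.
  exact: np_add wA npXY.
case: (step2 cA HvA wA na np hx hW) => [hY|hX].
  exact: key V1 V2 np m i2 nV1 hY.
exact: key V2 V1 (np_sym np) (mono_sym m) i1 nV2 hX.
Qed.


Lemma ext_facts A w a X Y u0 : complete_on adj A -> noRTat A w -> w \in A ->
  a \notin cols (A :\ w) -> nonempty_partition (A :\ w) X Y ->
  mono_between adj col X Y -> u0 \in A :\ w -> col w u0 = a ->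
  (forall y, y \in Y -> col w y != a) ->
  [/\ mono_between adj col (w |: X) Y, nonempty_partition A (w |: X) Y,
      w |: X \subset A, #|w |: X| = #|X|.+1 &
      [/\ #|w |: X| < #|A|, ncolors adj col X < ncolors adj col (w |: X),
          eA (w |: X) = 'C(#|X|.+1, 2), u0 \in X & 0 < #|X| ]].
Proof.
move=> cA HvA wA na npXY mXY u0A' eu0 hY.
case/np_unpack: (npXY) => [[p' p'X] [q' q'Y] disXY eXY].
have u0X : u0 \in X.
  move: (u0A'); rewrite eXY => /orP[//|u0Y].
  by move: (hY _ u0Y); rewrite eu0 eqxx.
have sX := np_sub1 npXY; have sY := np_sub2 npXY.
have mono' := mono_add cA HvA wA na sX sY disXY mXY u0X eu0 hY.
have wX : w \notin X by apply/negP => /(subsetP sX); rewrite !inE eqxx.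
have cX' : #|w |: X| = #|X|.+1 by rewrite cardsU1 wX.
have sX' : w |: X \subset A.
  apply/subsetP => x; rewrite in_setU1 => /orP[/eqP->//|xX].
  by move: (subsetP sX _ xX); rewrite inD1 => /andP[].
have hcXY := np_card npXY.
have c1 : #|A| = #|A :\ w|.+1 by rewrite (cardsD1 w A) wA.
have Y0 : 0 < #|Y| by rewrite card_gt0; apply/set0Pn; exists q'.
have X0 : 0 < #|X| by rewrite card_gt0; apply/set0Pn; exists p'.
have ltX' : #|w |: X| < #|A| by rewrite cX' c1 hcXY; move: Y0; clear; lia.
have cX'c := complete_sub sX' cA.
have aX' : a \in cols (w |: X).
  rewrite -eu0; apply: colsI; rewrite ?in_setU1 ?eqxx ?u0X ?orbT //.
  apply: (completeP cA) => //; first by move: (subsetP sX _ u0X); rewrite inD1 => /andP[].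
  by rewrite eq_sym; move: (subsetP sX _ u0X); rewrite inD1 => /andP[].
have naX : a \notin cols X by apply/negP => /(cols_sub sX); apply/negP.
have ltc := ncolors_lt (subsetUr [set w] X) aX' naX.
split => //; first exact: np_add wA npXY.
by split => //; rewrite (eA_complete cX'c) cX'.
Qed.

Lemma pair_neq (x y x' y' : T) : x \notin [set x'; y'] -> [set x; y] != [set x'; y'].
Proof. by move=> h; apply/eqP => e; move: h; rewrite -e !inE eqxx. Qed.

Lemma pair_neq2 (x y x' y' : T) : y \notin [set x'; y'] -> [set x; y] != [set x'; y'].
Proof. by move=> h; apply/eqP => e; move: h; rewrite -e !inE eqxx orbT. Qed.

Lemma bin3 : 'C(3, 2) = 3. Proof. by []. Qed.
Lemma bin4 : 'C(4, 2) = 6. Proof. by []. Qed.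

Lemma G1claim (A : {set T}) : #|rts A| = 1 -> 'C(#|A|.+1, 2) <= eA A + ncolors adj col A ->
  [/\ inG1 adj col A, complete_on adj A & ncolors adj col A = #|A|].
Proof.
elim/card_ind: A => A IH r1 hf.
have r1' : #|rts A| <= 1 by rewrite r1.
have [S SA] : exists S, S \in rts A by apply/set0Pn; rewrite -card_gt0 r1.
move: (SA); rewrite rtsP => /andP[rS sSA].
have hc := c_le_e A; have he := eA_le A.
have S3 := rt_card rS.
case: (boolP (A \subset S)) => hAS.
  have eAS : A = S by apply/eqP; rewrite eqEcard hAS subset_leq_card.
  have A3 : #|A| = 3 by rewrite eAS.
  split; [by apply: G1_rainbow; rewrite eAS | by rewrite eAS; apply: rt_complete | ].
  by move: hf he hc; rewrite A3 bin3 bin4; clear; lia.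
case/subsetPn: hAS => v vA vS.
have noRT u : u \in A -> u \notin S -> noRTat A u.
  move=> uA uS; apply: rt_noRT => // S' S'A.
  by rewrite (rts_uniq r1' SA S'A).
have [w [wA wS hw]] : exists w, [/\ w \in A, w \notin S & deg A w + size (newcols A w) <= #|A|].
  apply: (lemV (rt_complete rS)) => //.
  by exists v; rewrite vA vS.
have HvA := noRT w wA wS.
have c1 : #|A| = #|A :\ w|.+1 by rewrite (cardsD1 w A) wA.
have hs := fstep wA.
have SA' : S \in rts (A :\ w).
  rewrite rtsP rS /=; apply/subsetP => x xS; rewrite inD1 (subsetP sSA _ xS) andbT.
  by apply/eqP => e; move: wS; rewrite -e xS.
have r1'' : #|rts (A :\ w)| = 1.
  apply/eqP; rewrite eqn_leq; apply/andP; split.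
    rewrite -r1; apply: subset_leq_card; apply: rts_sub; apply: subD1set.
  by rewrite card_gt0; apply/set0Pn; exists S.
have b1 := binS2 #|A :\ w|.+1; have b2 := binS2 #|A :\ w|.
have hf' : 'C(#|A :\ w|.+1, 2) <= eA (A :\ w) + ncolors adj col (A :\ w).
  by move: hf hs hw; rewrite c1; clear -b1 b2; lia.
have lt1 : #|A :\ w| < #|A| by rewrite c1.
have [iA' cA' nA'] := IH _ lt1 r1'' hf'.
have eA' := eA_complete cA'.
have hd : #|A| <= deg A w + size (newcols A w).
  by move: hf hs; rewrite c1 eA' nA'; clear -b1 b2; lia.
have [cA s1] := step1 wA cA' HvA hd.
case E: (newcols A w) s1 => [|a [|]] // _.
have aN : a \in newcols A w by rewrite E inE eqxx.
move: (aN); rewrite mem_filter => /andP[na aA].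
have [u0 u0P eu0] := newcols_rep wA aN.
have u0A' : u0 \in A :\ w.
  by rewrite inD1 (Pv_neq u0P); move: u0P; rewrite inE => /andP[->].
have ncA : ncolors adj col A = #|A|.
  have := ncolors_del A w; rewrite E /=.
  have := ncolors_lt (subD1set A w) aA na; rewrite c1 nA'; clear; lia.
have A4 : 4 <= #|A|.
  have : S \subset A :\ v.
    apply/subsetP => x xS; rewrite inD1 (subsetP sSA _ xS) andbT.
    by apply/eqP => e; move: vS; rewrite -e xS.
  move/subset_leq_card; rewrite S3 (cardsD1 v A) vA; clear; lia.
case: (boolP [exists w0, (w0 \in A :\ w) && (col w w0 != a)]) => [/existsP hW | hW]; last first.
  split => //; apply: (@G1_split _ _ _ _ (A :\ w) [set w]) => //.
  - exact: np_single u0A'.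
  - move=> x1 y1 x2 y2 h1; rewrite single_in => /eqP-> h3; rewrite single_in => /eqP-> _ _.
    have ha x : x \in A :\ w -> col x w = a.
      move=> xA; rewrite colC; apply/eqP; apply/negPn/negP => ne.
      by move/negP: hW; apply; apply/existsP; exists x; rewrite xA ne.
    by rewrite !ha.
  - by apply: G0_K1; rewrite cards1.
split => //.
have inA x : x \in A :\ w -> x \in A by rewrite inD1 => /andP[].
have nw x : x \in A :\ w -> w != x by rewrite inD1 eq_sym => /andP[].
case: iA' => [rA' | V1 V2 _ _ _ np m i1 i2].
  case: hW => w0 /andP[w0A ew0].
  have A'3 := rt_card rA'.
  have u0w0 : u0 != w0 by apply/eqP => e; move: ew0; rewrite -e eu0 eqxx.
  have [z zP] : exists z, z \in (A :\ w) :\ u0 :\ w0.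
    apply/set0Pn; rewrite -card_gt0.
    have := cardsD1 u0 (A :\ w); have := cardsD1 w0 (A :\ w :\ u0).
    rewrite u0A' inD1 eq_sym u0w0 w0A A'3; clear; lia.
  move: zP; rewrite inD1 => /andP[zw0]; rewrite inD1 => /andP[zu0 zA'].
  have cA'' := rt_complete rA'.
  case: (eqVneq (col w z) a) => ez.
    have k1 := Kc cA HvA wA na u0A' eu0 w0A ew0.
    have k2 := Kc cA HvA wA na zA' ez w0A ew0.
    have nu0 : u0 \notin [set z; w0] by rewrite !inE negb_or eq_sym zu0 u0w0.
    have := rt_cols rA' u0A' w0A zA' w0A u0w0 zw0 (pair_neq w0 nu0).
    by rewrite k1 k2 eqxx.
  have k1 := Kc cA HvA wA na u0A' eu0 w0A ew0.
  have k2 := Kc cA HvA wA na u0A' eu0 zA' ez.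
  have nz : w0 \notin [set u0; z] by rewrite !inE negb_or eq_sym u0w0 eq_sym zw0.
  have nu : u0 \notin [set w0; z] by rewrite !inE negb_or u0w0 eq_sym zu0.
  have uz : u0 != z by rewrite eq_sym.
  have wz : w0 != z by rewrite eq_sym.
  have d1 := rt_cols rA' u0A' w0A u0A' zA' u0w0 uz (pair_neq2 u0 nz).
  have d2 := rt_cols rA' u0A' w0A w0A zA' u0w0 wz (pair_neq w0 nu).
  have d3 := rt_cols rA' u0A' zA' w0A zA' uz wz (pair_neq z nu).
  exfalso; apply: (HvA w0 z (inA _ w0A) (inA _ zA')).
  - exact: (completeP cA wA (inA _ w0A) (nw _ w0A)).
  - exact: (completeP cA wA (inA _ zA') (nw _ zA')).
  - exact: (completeP cA (inA _ w0A) (inA _ zA') wz).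
  - by rewrite -k1 -k2 d1.
  - by rewrite -k1 d2.
  - by rewrite -k2 d3.
case/np_unpack: (np) => [[p pV] [q qV] dis e].
have s1 : V1 \subset A := subset_trans (np_sub1 np) (subD1set A w).
have s2 : V2 \subset A := subset_trans (np_sub2 np) (subD1set A w).
have [R RV1] := G1_has_rt i1.
have RS : R = S := rts_uniq r1' SA (subsetP (rts_sub s1) _ RV1).
have SV1 : S \subset V1 by move: RV1; rewrite rtsP RS => /andP[].
have [x0 x0S] : exists x0, x0 \in S by apply/set0Pn; rewrite -card_gt0 S3.
have x0V1 := subsetP SV1 _ x0S.
have r0V2 : rts V2 = set0.
  apply/eqP; rewrite -subset0; apply/subsetP => R' R'V2.
  have R'S := rts_uniq r1' SA (subsetP (rts_sub s2) _ R'V2).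
  move: R'V2; rewrite rtsP R'S => /andP[_ /subsetP /(_ _ x0S)].
  by rewrite (dis _ x0V1).
have r1V1 : #|rts V1| <= 1 := leq_trans (subset_leq_card (rts_sub s1)) r1'.
have V20 : 0 < #|V2| by rewrite card_gt0; apply/set0Pn; exists q.
have cV1 := complete_sub s1 cA; have cV2 := complete_sub s2 cA.
have bV1 := c_bound1 r1V1 cV1; have bV2 := c_bound0 r0V2 V20 cV2.
have hcard := np_card np.
have hB : #|V1| + (#|V2| - 1) + 1 <= ncolors adj col (A :\ w).
  by rewrite nA' hcard; move: V20; clear; lia.
have h2 : ncolors adj col V2 <= #|V2| - 1 by move: bV2; clear; lia.
have [hx nV1 nV2] := cross_all np cA' m hB bV1 h2.
case: (step2 cA HvA wA na np hx hW) => [hY|hX].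
  have [mono' np' sX' cX' [ltX' ltc eX' u0X X0]] := ext_facts cA HvA wA na np m u0A' eu0 hY.
  have r1X : #|rts (w |: V1)| = 1.
    apply/eqP; rewrite eqn_leq; apply/andP; split.
      exact: leq_trans (subset_leq_card (rts_sub sX')) r1'.
    rewrite card_gt0; apply/set0Pn; exists S; rewrite rtsP rS /=.
    exact: subset_trans SV1 (subsetUr _ _).
  have bnd : 'C(#|w |: V1|.+1, 2) <= eA (w |: V1) + ncolors adj col (w |: V1).
    rewrite eX' cX'; have := binS2 #|V1|.+1; move: ltc nV1; clear; lia.
  have [iV1' _ _] := IH _ ltX' r1X bnd.
  exact: (@G1_split _ _ _ _ (w |: V1) V2).
have [mono' np' sX' cX' [ltX' ltc eX' u0X X0]] :=
  ext_facts cA HvA wA na (np_sym np) (mono_sym m) u0A' eu0 hX.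
have r0X : rts (w |: V2) = set0.
  apply/eqP; rewrite -subset0; apply/subsetP => R' R'V.
  have R'S := rts_uniq r1' SA (subsetP (rts_sub sX') _ R'V).
  move: R'V; rewrite rtsP R'S => /andP[_ /subsetP /(_ _ x0S)].
  rewrite in_setU1 (dis _ x0V1) orbF.
  have : x0 \in A :\ w by rewrite e x0V1.
  by rewrite inD1 => /andP[/negbTE ->].
have X'0 : 0 < #|w |: V2| by rewrite cX'.
have bnd : 'C(#|w |: V2|.+1, 2) <= (eA (w |: V2) + ncolors adj col (w |: V2)).+1.
  rewrite eX' cX'; have := binS2 #|V2|.+1; move: ltc nV2 V20; clear; lia.
have [iV2' _ _] := G0claim r0X X'0 bnd.
apply: (@G1_split _ _ _ _ V1 (w |: V2)) => //.
- exact: np_sym np'.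
- exact: mono_sym mono'.
Qed.

End S.

Theorem theorem3 (T : finType) (adj : rel T) (col : T -> T -> nat) (n : nat) :
  (forall x y, adj x y = adj y x) ->
  (forall x, ~~ adj x x) ->
  (forall x y, col x y = col y x) ->
  #|T| = n -> 3 <= n ->
  'C(n.+1, 2) <= num_edges adj + ncolors adj col [set: T] ->
  #|[set S : {set T} | rainbow_triangle adj col S]| = 1 ->
  inG1 adj col [set: T].
Proof.
move=> aC airr cC hn h3 hf hr.
have r1 : #|rts adj col [set: T]| = 1.
  by rewrite -hr; apply: eq_card => S; rewrite !inE subsetT andbT.
have ee : eA adj [set: T] = num_edges adj.
  by rewrite /eA /num_edges; apply: eq_card => e; rewrite !inE subsetT andbT.
have hf' : 'C(#|[set: T]|.+1, 2) <= eA adj [set: T] + ncolors adj col [set: T].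
  by rewrite ee cardsT hn.
by case: (G1claim aC airr cC r1 hf').
Qed.
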